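(* Under the model assumptions in the context, suppose the distribution of $\mathbf W$ is $p_{\mathbf W}(\cdot;\boldsymbol\psi^* )$ where $\boldsymbol\psi^*\in\Theta_{\boldsymbol\psi}$ satisfies $\pi^1<\dots<\pi^J$ and conditions ID$(k)$ for some integer $k\ge1$ with $T_0\ge k+1$, $T\ge2(k+1)$. Then for each $t\ge T_0+1$ and each $j\in\{1,\dots,J\}$, \[ \boldsymbol\mu^{\mathrm{ATT},j}_t=\sum_{\mathbf x_{T_0}\in\mathcal X}\Pr(\mathbf X_{T_0}=\mathbf x_{T_0}\mid D=1,Z=j)\Big(\mathbb{E}[\mathbf X_t\mid \mathbf X_{T_0}=\mathbf x_{T_0},D=1,Z=j]-\mathbb{E}[\mathbf X_t\mid \mathbf X_{T_0}=\mathbf x_{T_0},D=0,Z=j]\Big), \] and $\boldsymbol\mu^{\mathrm{ATT},j}_t$ is uniquely determined by the pmf $\{p_{\mathbf W}(\mathbf w;\boldsymbol\psi^* ):\mathbf w\in\mathcal X^T\times\{0,1\}\}$.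
   Context: Fix integers $K\ge2$, $J\ge1$, $T_0\ge1$, $T>T_0$, $\mathcal X=\{x\in\{0,1\}^K:\sum_k x^{(k)}=1\}$. A unit has latent type $Z\in\{1,\dots,J\}$, treatment indicator $D\in\{0,1\}$ (treated units untreated in periods $\le T_0$, treated afterwards), potential outcomes $\mathbf X_t(0),\mathbf X_t(1)\in\mathcal X$, $t=1,\dots,T$; observed $\mathbf X_t=\mathbf X_t(0)$ for $t\le T_0$, $\mathbf X_t=D\mathbf X_t(1)+(1-D)\mathbf X_t(0)$ for $t>T_0$, $\mathbf W=(\mathbf X_1,\dots,\mathbf X_T,D)$, $\mathbf X_1^{T_0}=(\mathbf X_1,\dots,\mathbf X_{T_0})$. LTATT: $\boldsymbol\mu^{\mathrm{ATT},j}_t=\mathbb{E}[\mathbf X_t(1)-\mathbf X_t(0)\mid D=1,Z=j]$. Model assumptions: no anticipation $\mathbf X_t(1)=\mathbf X_t(0)$ for $t\le T_0$; transition independence conditional on types: for $t\ge T_0+1$, all $\mathbf x_t$, $\mathbf x_1^{T_0}$, $j$, $\Pr(\mathbf X_t(0)=\mathbf x_t\mid\mathbf X_1^{T_0}=\mathbf x_1^{T_0},D=0,Z=j)=\Pr(\mathbf X_t(0)=\mathbf x_t\mid\mathbf X_1^{T_0}=\mathbf x_1^{T_0},D=1,Z=j)$; common support: there is $\epsilon>0$ with $\epsilon\le\Pr(D=1\mid\mathbf X_1^{T_0}=\mathbf x_1^{T_0},Z=j)\le1-\epsilon$ for all $\mathbf x_1^{T_0}$, $j$; first-order Markov: for each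 $j$ and $d$, $\Pr(\mathbf X_t(d)\mid\mathbf X_1(d),\dots,\mathbf X_{t-1}(d),D=d,Z=j)=\Pr(\mathbf X_t(d)\mid\mathbf X_{t-1}(d),D=d,Z=j)$ for $t=2,\dots,T$. The number of types $J$ is known. Parametrization: $\boldsymbol\psi=(\boldsymbol\pi,\boldsymbol\varphi^1,\dots,\boldsymbol\varphi^J)$ with $\pi^j=\Pr(Z=j)$ and $\boldsymbol\varphi^j$ consisting of $p^j_{\mathbf X_1(0),D}(x,d)=\Pr(\mathbf X_1(0)=x,D=d\mid Z=j)$, $p^j_{\mathbf X_t(0)|\mathbf X_{t-1}(0)}(x|x')=\Pr(\mathbf X_t(0)=x\mid\mathbf X_{t-1}(0)=x',Z=j)$ ($t=2,\dots,T$) and $p^j_{\mathbf X_t(1)|\mathbf X_{t-1}(1)}(x|x')$ ($t=T_0+1,\dots,T$) defined analogously. $\Theta_{\boldsymbol\psi}$: such $\boldsymbol\psi$ with $\sum_j\pi^j=1$, $\epsilon\le\pi^j\le1-\epsilon$. The pmf of $\mathbf W$ is $p_{\mathbf W}(\mathbf w;\boldsymbol\psi)=\sum_j\pi^jp^j_{\mathbf W}(\mathbf w;\boldsymbol\varphi^j)$, where for $\mathbf w=(x_1,\dots,x_T,d)$, $p^j_{\mathbf W}=p^j_{\mathbf X_1(0),D}(x_1,0)\prod_{t=2}^Tp^j_{\mathbf X_t(0)|\mathbf X_{t-1}(0)}(x_t|x_{t-1})$ if $d=0$ and $p^j_{\mathbf X_1(0),D}(x_1,1)\prod_{t=2}^{T_0}p^j_{\mathbf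 X_t(0)|\mathbf X_{t-1}(0)}(x_t|x_{t-1})\prod_{t=T_0+1}^Tp^j_{\mathbf X_t(1)|\mathbf X_{t-1}(1)}(x_t|x_{t-1})$ if $d=1$. Conditions ID$(k)$ on $\boldsymbol\psi$: for $\xi_1=(x_1,\dots,x_k)\in\mathcal X^k$, $P^j_1(\xi_1,d)=p^j_{\mathbf X_1(0),D}(x_1,d)\prod_{t=2}^kp^j_{\mathbf X_t(0)|\mathbf X_{t-1}(0)}(x_t|x_{t-1})$, $\tau^j(\xi_1,d)=\pi^jP^j_1(\xi_1,d)/\sum_m\pi^mP^m_1(\xi_1,d)$; $q^j_{21}(\xi_2|\xi_1)=p^j_{\mathbf X_{k+1}(0)|\mathbf X_k(0)}(\xi_2|x_k)$, $q^j_{32}(\xi_3|\xi_2)=p^j_{\mathbf X_{k+2}(0)|\mathbf X_{k+1}(0)}(\xi_3|\xi_2)$ for $\xi_2,\xi_3\in\mathcal X$; $q^j_{43}(\xi_4|\xi_3)=\prod_{t=k+3}^Tp^j_{\mathbf X_t(0)|\mathbf X_{t-1}(0)}(x_t|x_{t-1})$ for $\xi_4=(x_{k+3},\dots,x_T)$, $x_{k+2}=\xi_3$; $\lambda^j_1(\xi_2|\xi_1)=\tau^j(\xi_1,0)q^j_{21}(\xi_2|\xi_1)$. Given $a_1,\dots,a_J\in\mathcal X^k$, $b_1,\dots,b_{J-1}\in\mathcal X^{T-k-2}$: $\bar L_{\xi_2}=[\lambda^j_1(\xi_2|a_i)]_{i,j}$; $L_{\xi_3}$ is the $J\times J$ matrix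 with first row all ones and $(i+1,j)$ entry $q^j_{43}(b_i|\xi_3)$; $D_{\xi_3|\xi_2}=\mathrm{diag}_j(q^j_{32}(\xi_3|\xi_2))$. (a) There is $\xi_3^*\in\mathcal X$ such that for every $\xi_3\in\mathcal X$ there exist $\check\xi_2,\bar\xi_2,\bar\xi_3\in\mathcal X$, $a_i$, $b_i$ with (i) $\bar L_{\check\xi_2},\bar L_{\bar\xi_2},L_{\xi_3},L_{\xi_3^*},L_{\bar\xi_3}$ nonsingular, (ii) the diagonal entries of $D_{\xi_3|\check\xi_2}D_{\bar\xi_3|\check\xi_2}^{-1}D_{\bar\xi_3|\bar\xi_2}D_{\xi_3|\bar\xi_2}^{-1}$ pairwise distinct; (b) all $q^j_{32}$ and $q^j_{43}$ values are positive; (c) for every $\xi_1$ there are $c_1,\dots,c_J\in\mathcal X$ with $[q^j_{21}(c_i|\xi_1)]_{i,j}$ nonsingular; (d) for every $\xi_2$ there are $e_1,\dots,e_J\in\mathcal X^k$ with $[\tau^j(e_i,1)q^j_{21}(\xi_2|e_i)]_{i,j}$ nonsingular. *)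

(* Defs.v *)
From HB Require Import structures.
From mathcomp Require Import all_boot all_order all_algebra.
Unset Printing Implicit Defensive.
Import Order.TTheory GRing.Theory Num.Theory.
Local Open Scope ring_scope.

(* Conventions.
   - A state x in calX = {one-hot vectors in {0,1}^K} is represented by the
     index k : 'I_K of its unique 1; [onehot x] is the vector itself (a row
     vector in R^K).
   - Latent type j in {1..J} is represented by j : 'I_J (type j+1).
   - Time periods are natural numbers t = 1..T (values at other indices are
     irrelevant).
   - A (finite) probability space: a finite type Om with pmf P; random
     variables Z, D, X_t(0), X_t(1) are functions on Om.
   - Division by 0 is 0 (MathComp convention) in conditional probabilities. *)

Record model (R : realFieldType) (K J : nat) := Model {
  Om : finType;
  Pm : Om -> R;
  Zm : Om -> 'I_J;
  Dm : Om -> bool;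
  X0m : nat -> Om -> 'I_K;
  X1m : nat -> Om -> 'I_K
}.
Arguments Om {R K J} m.
Arguments Pm {R K J} m _.
Arguments Zm {R K J} m _.
Arguments Dm {R K J} m _.
Arguments X0m {R K J} m _ _.
Arguments X1m {R K J} m _ _.

Section ModelDefs.
Context {R : realFieldType} {K J : nat}.
Variables T0 T : nat.

Definition onehot (x : 'I_K) : 'rV[R]_K := \row_i (i == x)%:R.

Definition Xpot (M : model R K J) (d : bool) : nat -> Om M -> 'I_K :=
  if d then X1m M else X0m M.

Definition Xobs (M : model R K J) (t : nat) (w : Om M) : 'I_K :=
  if (t <= T0)%N then X0m M t w else if Dm M w then X1m M t w else X0m M t w.

Definition Pr (M : model R K J) (A : pred (Om M)) : R := \sum_(w | A w) Pm M w.

Definition cPr (M : model R K J) (A B : pred (Om M)) : R :=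
  Pr M (fun w => A w && B w) / Pr M B.

Definition cE (M : model R K J) (f : Om M -> 'rV[R]_K) (B : pred (Om M)) : 'rV[R]_K :=
  (Pr M B)^-1 *: \sum_(w | B w) Pm M w *: f w.

Definition hist {O : finType} (Y : nat -> O -> 'I_K) (n : nat) (h : nat -> 'I_K) : pred O :=
  fun w => [forall i : 'I_n, Y i.+1 w == h i.+1].

Definition prob_ok (M : model R K J) :=
  (forall w, 0 <= Pm M w) /\ \sum_w Pm M w = 1.

Definition no_anticipation (M : model R K J) :=
  forall t, (1 <= t <= T0)%N -> forall w, 0 < Pm M w -> X1m M t w = X0m M t w.

Definition trans_indep (M : model R K J) :=
  forall t, (T0 < t <= T)%N -> forall (x : 'I_K) (h : nat -> 'I_K) (j : 'I_J),
    cPr M (fun w => X0m M t w == x)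
          (fun w => [&& hist (Xobs M) T0 h w, ~~ Dm M w & Zm M w == j])
  = cPr M (fun w => X0m M t w == x)
          (fun w => [&& hist (Xobs M) T0 h w, Dm M w & Zm M w == j]).

Definition common_support (M : model R K J) :=
  exists e : R, 0 < e /\ forall (h : nat -> 'I_K) (j : 'I_J),
    e <= cPr M (fun w => Dm M w) (fun w => hist (Xobs M) T0 h w && (Zm M w == j)) <= 1 - e.

Definition markov (M : model R K J) :=
  forall (d : bool) (j : 'I_J) (t : nat), (2 <= t <= T)%N -> forall h : nat -> 'I_K,
    0 < Pr M (fun w => [&& hist (Xpot M d) t.-1 h w, Dm M w == d & Zm M w == j]) ->
    cPr M (fun w => Xpot M d t w == h t)
          (fun w => [&& hist (Xpot M d) t.-1 h w, Dm M w == d & Zm M w == j])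
  = cPr M (fun w => Xpot M d t w == h t)
          (fun w => [&& Xpot M d t.-1 w == h t.-1, Dm M w == d & Zm M w == j]).

Definition model_assumptions (M : model R K J) :=
  [/\ prob_ok M, no_anticipation M, trans_indep M, common_support M & markov M].

Definition LTATT (M : model R K J) (t : nat) (j : 'I_J) : 'rV[R]_K :=
  cE M (fun w => onehot (X1m M t w) - onehot (X0m M t w))
       (fun w => Dm M w && (Zm M w == j)).

End ModelDefs.

Record param (R : realFieldType) (K J : nat) := Param {
  pi_ : 'I_J -> R;
  p1_ : 'I_J -> 'I_K -> bool -> R;          (* p^j_{X_1(0),D}(x,d) *)
  q0_ : 'I_J -> nat -> 'I_K -> 'I_K -> R;   (* q0_ j t x x' = p^j_{X_t(0)|X_{t-1}(0)}(x|x') *)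
  q1_ : 'I_J -> nat -> 'I_K -> 'I_K -> R    (* q1_ j t x x' = p^j_{X_t(1)|X_{t-1}(1)}(x|x') *)
}.
Arguments pi_ {R K J} p _.
Arguments p1_ {R K J} p _ _ _.
Arguments q0_ {R K J} p _ _ _ _.
Arguments q1_ {R K J} p _ _ _ _.

Section ParamDefs.
Context {R : realFieldType} {K J : nat}.
Variables T0 T : nat.

Definition in_Theta (eps : R) (psi : param R K J) :=
  [/\ \sum_j pi_ psi j = 1,
      forall j, eps <= pi_ psi j <= 1 - eps,
      forall j, (forall x d, 0 <= p1_ psi j x d) /\ \sum_x \sum_(d : bool) p1_ psi j x d = 1,
      forall j t, (2 <= t <= T)%N -> forall x',
        (forall x, 0 <= q0_ psi j t x x') /\ \sum_x q0_ psi j t x x' = 1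
    & forall j t, (T0 < t <= T)%N -> forall x',
        (forall x, 0 <= q1_ psi j t x x') /\ \sum_x q1_ psi j t x x' = 1].

(* p^j_W(w; phi^j), w = (h 1, ..., h T, d) *)
Definition pWj (psi : param R K J) (j : 'I_J) (h : nat -> 'I_K) (d : bool) : R :=
  if d then
    p1_ psi j (h 1%N) true
    * \prod_(2 <= t < T0.+1) q0_ psi j t (h t) (h t.-1)
    * \prod_(T0.+1 <= t < T.+1) q1_ psi j t (h t) (h t.-1)
  else
    p1_ psi j (h 1%N) false * \prod_(2 <= t < T.+1) q0_ psi j t (h t) (h t.-1).

Definition pW (psi : param R K J) (h : nat -> 'I_K) (d : bool) : R :=
  \sum_j pi_ psi j * pWj psi j h d.

Variable k : nat.

Definition P1 (psi : param R K J) (j : 'I_J) (xi1 : nat -> 'I_K) (d : bool) : R :=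
  p1_ psi j (xi1 1%N) d * \prod_(2 <= t < k.+1) q0_ psi j t (xi1 t) (xi1 t.-1).

Definition tau (psi : param R K J) (j : 'I_J) (xi1 : nat -> 'I_K) (d : bool) : R :=
  pi_ psi j * P1 psi j xi1 d / \sum_m pi_ psi m * P1 psi m xi1 d.

Definition q21 (psi : param R K J) (j : 'I_J) (xi2 : 'I_K) (xi1 : nat -> 'I_K) : R :=
  q0_ psi j k.+1 xi2 (xi1 k).

Definition q32 (psi : param R K J) (j : 'I_J) (xi3 xi2 : 'I_K) : R :=
  q0_ psi j k.+2 xi3 xi2.

(* xi4 = (x_{k+3}, ..., x_T) given by xi4 t, and x_{k+2} = xi3 *)
Definition q43 (psi : param R K J) (j : 'I_J) (xi4 : nat -> 'I_K) (xi3 : 'I_K) : R :=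
  \prod_(k.+3 <= t < T.+1)
     q0_ psi j t (xi4 t) (if t == k.+3 then xi3 else xi4 t.-1).

Definition lambda1 (psi : param R K J) (j : 'I_J) (xi2 : 'I_K) (xi1 : nat -> 'I_K) : R :=
  tau psi j xi1 false * q21 psi j xi2 xi1.

Definition Lbar (psi : param R K J) (a : 'I_J -> nat -> 'I_K) (xi2 : 'I_K) : 'M[R]_J :=
  \matrix_(i, j) lambda1 psi j xi2 (a i).

Definition Lmat (psi : param R K J) (b : nat -> nat -> 'I_K) (xi3 : 'I_K) : 'M[R]_J :=
  \matrix_(i, j) (if (i == 0 :> nat) then 1 else q43 psi j (b (i : nat)) xi3).

Definition Dmat (psi : param R K J) (xi3 xi2 : 'I_K) : 'M[R]_J :=
  diag_mx (\row_j q32 psi j xi3 xi2).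

Definition ID (psi : param R K J) :=
  [/\
      (exists xi3s : 'I_K, forall xi3 : 'I_K,
        exists (xi2c xi2b xi3b : 'I_K) (a : 'I_J -> nat -> 'I_K) (b : nat -> nat -> 'I_K),
          [/\ Lbar psi a xi2c \in unitmx /\ Lbar psi a xi2b \in unitmx,
              Lmat psi b xi3 \in unitmx, Lmat psi b xi3s \in unitmx,
              Lmat psi b xi3b \in unitmx &
              let Mx := Dmat psi xi3 xi2c *m invmx (Dmat psi xi3b xi2c)
                        *m Dmat psi xi3b xi2b *m invmx (Dmat psi xi3 xi2b) in
              forall j1 j2 : 'I_J, Mx j1 j1 = Mx j2 j2 -> j1 = j2]),
      (forall j xi3 xi2, 0 < q32 psi j xi3 xi2) /\ (forall j xi4 xi3, 0 < q43 psi j xi4 xi3),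
      (forall xi1 : nat -> 'I_K, exists c : 'I_J -> 'I_K,
          \matrix_(i, j) q21 psi j (c i) xi1 \in unitmx)
    &
      (forall xi2 : 'I_K, exists e : 'I_J -> nat -> 'I_K,
          \matrix_(i, j) (tau psi j (e i) true * q21 psi j xi2 (e i)) \in unitmx)].

End ParamDefs.

(* The data-generating process M has parameter psi: the joint law of (Z, W)
   is Pr(Z = j, W = w) = pi^j p^j_W(w; phi^j)  (so that the distribution of W is
   p_W(.; psi), pi^j = Pr(Z = j) and phi^j parametrizes W | Z = j). *)
Definition generated_by {R : realFieldType} {K J : nat} (T0 T : nat)
    (M : model R K J) (psi : param R K J) :=
  forall (j : 'I_J) (h : nat -> 'I_K) (d : bool),
    Pr M (fun w => [&& Zm M w == j, hist (Xobs T0 M) T h w & Dm M w == d])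
    = pi_ psi j * pWj T0 T psi j h d.

Definition prop6_hyps {R : realFieldType} {K J : nat} (T0 T : nat) (eps : R)
    (M : model R K J) (psi : param R K J) (k : nat) :=
  [/\ model_assumptions T0 T M,
      in_Theta T0 T eps psi,
      (forall i j : 'I_J, (i < j)%N -> pi_ psi i < pi_ psi j),
      generated_by T0 T M psi
    & [/\ (1 <= k)%N, (k.+1 <= T0)%N, (2 * k.+1 <= T)%N & ID T k psi]].

(* Main.v *)
Require Import Defs.
From HB Require Import structures.
From mathcomp Require Import all_boot all_order all_algebra.
From mathcomp Require Import zify ring lra.
Import Order.TTheory GRing.Theory Num.Theory.
Local Open Scope ring_scope.

Module Helpers.
Set Implicit Arguments. Unset Strict Implicit. Unset Printing Implicit Defensive.

Section PWsec.
Variables (R : realFieldType) (K J : nat) (T0 T : nat).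
Implicit Types (psi : param R K J).

Definition rr psi j (d : bool) s (x y : 'I_K) : R :=
  if d && (T0 < s)%N then q1_ psi j s x y else q0_ psi j s x y.
Definition PW psi j n (h : nat -> 'I_K) d :=
  p1_ psi j (h 1%N) d * \prod_(2 <= s < n.+1) rr psi j d s (h s) (h s.-1).
Definition mu psi j n h d := pi_ psi j * PW psi j n h d.
Definition Dat psi n h d := \sum_j mu psi j n h d.
Definition upd (h : nat -> 'I_K) n x := fun m => if m == n then x else h m.

Lemma pWj_PW psi j h d : (1 <= T0)%N -> (T0 < T)%N -> pWj T0 T psi j h d = PW psi j T h d.
Proof.
move=> h1 h2; rewrite /pWj /PW; case: d.
  rewrite -mulrA; congr (_ * _).
  rewrite [RHS](@big_cat_nat _ _ _ T0.+1) /=; [|lia|lia].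
  congr (_ * _).
    apply: eq_big_nat => s /andP [hs1 hs].
    by rewrite /rr /=; have -> : (T0 < s)%N = false by lia.
  apply: eq_big_nat => s /andP [hs1 hs].
  by rewrite /rr /=; have -> : (T0 < s)%N by lia.
congr (_ * _); apply: eq_big_nat => s _; by rewrite /rr.
Qed.

Lemma PW_ext psi j n h h' d : (1 <= n)%N -> (forall m, (1 <= m <= n)%N -> h m = h' m) ->
  PW psi j n h d = PW psi j n h' d.
Proof.
move=> hn e; rewrite /PW e ?hn //; congr (_ * _); apply: eq_big_nat => s hs.
by rewrite !e //; case: s hs => [|[|s]] //=; lia.
Qed.

Lemma PW_S psi j n h d : (1 <= n)%N ->
  PW psi j n.+1 h d = PW psi j n h d * rr psi j d n.+1 (h n.+1) (h n).
Proof. by move=> hn; rewrite /PW big_nat_recr //= mulrA. Qed.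

Lemma PW_split psi j m n h d : (1 <= m <= n)%N ->
  PW psi j n h d = PW psi j m h d * \prod_(m.+1 <= s < n.+1) rr psi j d s (h s) (h s.-1).
Proof.
move=> hmn; rewrite /PW -mulrA; congr (_ * _); apply: big_cat_nat; lia.
Qed.

Variable eps : R.
Lemma PW_marg psi j n h d : in_Theta T0 T eps psi -> (1 <= n < T)%N ->
  \sum_x PW psi j n.+1 (upd h n.+1 x) d = PW psi j n h d.
Proof.
case=> _ _ _ Hq0 Hq1 hn.
have -> : PW psi j n h d = PW psi j n h d * \sum_x rr psi j d n.+1 x (h n).
  rewrite /rr; case: (boolP (d && (T0 < n.+1)%N)) => c.
    by case: (Hq1 j n.+1 (ltac:(lia)) (h n)) => _ ->; rewrite mulr1.
  by case: (Hq0 j n.+1 (ltac:(lia)) (h n)) => _ ->; rewrite mulr1.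
rewrite mulr_sumr; apply: eq_bigr => x _; rewrite PW_S; last by lia.
rewrite /upd eqxx; have -> : (n == n.+1) = false by lia.
congr (_ * _); apply: PW_ext; first by lia.
by move=> m hm; have -> : (m == n.+1) = false by lia.
Qed.

Lemma mu_marg psi j n h d : in_Theta T0 T eps psi -> (1 <= n < T)%N ->
  \sum_x mu psi j n.+1 (upd h n.+1 x) d = mu psi j n h d.
Proof. by move=> Ht hn; rewrite /mu -mulr_sumr PW_marg. Qed.

Lemma Dat_marg psi n h d : in_Theta T0 T eps psi -> (1 <= n < T)%N ->
  \sum_x Dat psi n.+1 (upd h n.+1 x) d = Dat psi n h d.
Proof.
move=> Ht hn; rewrite /Dat exchange_big /=; apply: eq_bigr => j _; exact: mu_marg.
Qed.

Lemma down_eq (f g : nat -> (nat -> 'I_K) -> bool -> R) :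
  (forall n h d, (1 <= n < T)%N -> \sum_x f n.+1 (upd h n.+1 x) d = f n h d) ->
  (forall n h d, (1 <= n < T)%N -> \sum_x g n.+1 (upd h n.+1 x) d = g n h d) ->
  (forall h d, f T h d = g T h d) ->
  forall n, (1 <= n <= T)%N -> forall h d, f n h d = g n h d.
Proof.
move=> hf hg hT.
suff H : forall m n, (n + m = T)%N -> (1 <= n)%N -> forall h d, f n h d = g n h d.
  by move=> n hn; apply: (H (T - n)%N); lia.
elim=> [|m IH] n e hn h d; first by rewrite addn0 in e; rewrite e.
rewrite -hf; last by lia.
rewrite -hg; last by lia.
apply: eq_bigr => x _; apply: IH => //; lia.
Qed.

Lemma mu1_sum psi j : in_Theta T0 T eps psi ->
  \sum_(x : 'I_K) \sum_(d : bool) mu psi j 1 (fun _ => x) d = pi_ psi j.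
Proof.
case=> _ _ Hp _ _; rewrite /mu /PW.
case: (Hp j) => _ Hs.
rewrite -[RHS]mulr1 -{2}Hs mulr_sumr; apply: eq_bigr => x _.
by rewrite mulr_sumr; apply: eq_bigr => d _; rewrite big_geq // mulr1.
Qed.

End PWsec.

Section Getf.
Variables (K : nat) (x0 : 'I_K).
Definition getf m (g : {ffun 'I_m -> 'I_K}) (i : nat) : 'I_K :=
  if insub i is Some o then g o else x0.
Lemma getf_ord m (g : {ffun 'I_m -> 'I_K}) (o : 'I_m) : getf g o = g o.
Proof. by rewrite /getf valK. Qed.
Lemma getf_lt m (g : {ffun 'I_m -> 'I_K}) i (hi : (i < m)%N) : getf g i = g (Ordinal hi).
Proof. by rewrite -getf_ord. Qed.
End Getf.

Section Model.
Variables (R : realFieldType) (K J T0 T : nat) (x0 : 'I_K).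
Hypothesis hT0 : (1 <= T0)%N.
Hypothesis hT : (T0 < T)%N.

Definition PT := ({ffun 'I_T0 -> 'I_K} * {ffun 'I_(T - T0) -> 'I_K})%type.
Definition hpre (g1 : {ffun 'I_T0 -> 'I_K}) : nat -> 'I_K := fun n => getf x0 g1 n.-1.
Definition enc (g : PT) : nat -> 'I_K :=
  fun n => if (n <= T0)%N then getf x0 g.1 n.-1 else getf x0 g.2 (n - T0.+1).
Definition encx (x : 'I_K) (g2 : {ffun 'I_(T - T0) -> 'I_K}) : nat -> 'I_K :=
  fun n => if (n <= T0)%N then x else getf x0 g2 (n - T0.+1).
Definition lastf (g1 : {ffun 'I_T0 -> 'I_K}) := getf x0 g1 T0.-1.

Variable M : model R K J.
Definition pre w : {ffun 'I_T0 -> 'I_K} := [ffun i : 'I_T0 => Xobs T0 M i.+1 w].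
Definition suf w : {ffun 'I_(T - T0) -> 'I_K} := [ffun i : 'I_(T - T0) => Xobs T0 M (T0.+1 + i) w].

Lemma Xobs_pre n w : (1 <= n <= T0)%N -> Xobs T0 M n w = getf x0 (pre w) n.-1.
Proof.
move=> hn; have hi : (n.-1 < T0)%N by lia.
by rewrite (getf_lt _ _ hi) ffunE /=; congr Xobs; lia.
Qed.

Lemma Xobs_suf n w : (T0 < n <= T)%N -> Xobs T0 M n w = getf x0 (suf w) (n - T0.+1).
Proof.
move=> hn; have hi : (n - T0.+1 < T - T0)%N by lia.
by rewrite (getf_lt _ _ hi) ffunE /=; congr Xobs; lia.
Qed.

Lemma Xobs_T0 w : Xobs T0 M T0 w = lastf (pre w).
Proof. by rewrite Xobs_pre //; lia. Qed.

Lemma hist_enc g w : hist (Xobs T0 M) T (enc g) w = ((pre w, suf w) == g).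
Proof.
case: g => g1 g2; apply/forallP/eqP.
  move=> H; congr pair; apply/ffunP => i.
    have hi : (i < T)%N by have := ltn_ord i; lia.
    move/eqP: (H (Ordinal hi)); rewrite /enc /= ifT; last by have := ltn_ord i; lia.
    by rewrite ffunE => ->; rewrite getf_ord.
  have hi : (T0 + i < T)%N by have := ltn_ord i; lia.
  move/eqP: (H (Ordinal hi)); rewrite /enc /= ifF; last by lia.
  rewrite ffunE => ->; have -> : ((T0 + i).+1 - T0.+1 = i)%N by lia.
  by rewrite getf_ord.
case=> <- <- i; apply/eqP; rewrite /enc /=; case: ifP => hi.
  by rewrite Xobs_pre //; lia.
by rewrite Xobs_suf //; have := ltn_ord i; lia.
Qed.

Lemma hist_hpre g1 w : hist (Xobs T0 M) T0 (hpre g1) w = (pre w == g1).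
Proof.
apply/forallP/eqP.
  move=> H; apply/ffunP => i; move/eqP: (H i); rewrite ffunE => ->.
  by rewrite /hpre /= getf_ord.
move=> <- i; apply/eqP; rewrite /hpre /= getf_ord ffunE //.
Qed.

Definition Pw (A : pred (Om M)) := Pr M A.

Lemma push (V : lmodType R) (phi : 'I_J -> PT -> bool -> V) (psi : param R K J) :
  generated_by T0 T M psi ->
  \sum_w Pm M w *: phi (Zm M w) (pre w, suf w) (Dm M w) =
  \sum_j \sum_(g : PT) \sum_(d : bool) mu T0 psi j T (enc g) d *: phi j g d.
Proof.
move=> Hg.
rewrite (partition_big (fun w => (Zm M w, ((pre w, suf w), Dm M w))) predT) //=.
transitivity (\sum_j \sum_(p : PT * bool) mu T0 psi j T (enc p.1) p.2 *: phi j p.1 p.2); last first.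
  by apply: eq_bigr => j _; rewrite pair_big.
rewrite pair_big /=.
apply: eq_bigr => [[j [g d]]] _ /=.
rewrite /mu -pWj_PW // -Hg /Pr scaler_suml; apply: eq_big => w.
  by rewrite hist_enc -!xpair_eqE.
by move/eqP => [-> -> ->].
Qed.


Lemma Pr_ext (A B : pred (Om M)) : A =1 B -> Pr M A = Pr M B.
Proof. by move=> e; apply: eq_bigl. Qed.

Hypothesis Hprob : prob_ok M.

Lemma Pr_ge0 A : 0 <= Pr M A.
Proof. by apply: sumr_ge0 => w _; case: Hprob. Qed.

Lemma Pr_sub (A B : pred (Om M)) : (forall w, A w -> B w) -> Pr M A <= Pr M B.
Proof.
move=> s; rewrite /Pr [X in _ <= X](bigID A) /= -[X in X <= _]addr0.
have -> : \sum_(w | B w && A w) Pm M w = \sum_(w | A w) Pm M w.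
  by apply: eq_bigl => w; case: (boolP (A w)) => a; rewrite ?a ?(s _ a) ?andbF.
by apply: lerD => //; apply: sumr_ge0 => w _; case: Hprob.
Qed.

Lemma Pr_split (A : pred (Om M)) (P : pred (Om M)) :
  Pr M A = Pr M (fun w => A w && P w) + Pr M (fun w => A w && ~~ P w).
Proof. by rewrite /Pr (bigID P) /=; congr (_ + _); apply: eq_bigl => w; rewrite andbC. Qed.

Lemma Pr0_sum (V : lmodType R) (A : pred (Om M)) (f : Om M -> V) :
  Pr M A = 0 -> \sum_(w | A w) Pm M w *: f w = 0.
Proof.
move=> h0; apply: big1 => w Aw.
have -> : Pm M w = 0 by apply: (psumr_eq0P _ h0) => // w' _; case: Hprob.
by rewrite scale0r.
Qed.

Section P1.
Variable psi : param R K J.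
Hypothesis Hg : generated_by T0 T M psi.
Variable j : 'I_J.

Lemma push_slice (V : lmodType R) (P1 : pred {ffun 'I_T0 -> 'I_K})
  (f : {ffun 'I_(T - T0) -> 'I_K} -> V) (d0 : bool) :
  \sum_(w | P1 (pre w) && ((Dm M w == d0) && (Zm M w == j))) Pm M w *: f (suf w) =
  \sum_(g1 | P1 g1) \sum_g2 mu T0 psi j T (enc (g1, g2)) d0 *: f g2.
Proof.
pose phi (j' : 'I_J) (g : PT) (d : bool) :=
  if P1 g.1 && ((d == d0) && (j' == j)) then f g.2 else 0.
transitivity (\sum_w Pm M w *: phi (Zm M w) (pre w, suf w) (Dm M w)).
  rewrite big_mkcond /=; apply: eq_bigr => w _; rewrite /phi /=.
  by case: ifP => _ //; rewrite scaler0.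
rewrite (push phi Hg) (bigD1 j) //= [X in _ + X]big1 ?addr0; last first.
  move=> j' hj'; by apply: big1 => g _; apply: big1 => d _; rewrite /phi (negbTE hj') !andbF scaler0.
rewrite [RHS]big_mkcond /= [RHS](eq_bigr (fun g1 => \sum_g2
   (\sum_d mu T0 psi j T (enc (g1,g2)) d *: phi j (g1,g2) d))); last first.
  move=> g1 _; case: ifP => P1g.
    apply: eq_bigr => g2 _; rewrite big_bool /phi /= P1g eqxx.
    by rewrite /phi; clear phi; case: d0 P1g; rewrite /= ?scaler0 ?addr0 ?add0r.
  by rewrite big1 // => g2 _; apply: big1 => d _; rewrite /phi /= P1g scaler0.
by rewrite [RHS]pair_bigA; apply: eq_bigr => [[g1 g2]].
Qed.

Lemma Pr_slice (P1 : pred {ffun 'I_T0 -> 'I_K}) (d0 : bool) :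
  Pr M (fun w => P1 (pre w) && ((Dm M w == d0) && (Zm M w == j))) =
  \sum_(g1 | P1 g1) \sum_g2 mu T0 psi j T (enc (g1, g2)) d0.
Proof.
have H := push_slice (V := R^o) P1 (fun _ => 1) d0.
rewrite /Pr; transitivity (\sum_(w | P1 (pre w) && ((Dm M w == d0) && (Zm M w == j)))
   (Pm M w *: (1 : R^o))).
  by apply: eq_bigr => w _; exact: (esym (mulr1 _)).
rewrite H; apply: eq_bigr => g1 _; apply: eq_bigr => g2 _; exact: mulr1.
Qed.


Lemma mu_split g d : mu T0 psi j T (enc g) d =
  mu T0 psi j T0 (hpre g.1) d *
  \prod_(T0.+1 <= s < T.+1) rr T0 psi j d s (enc g s) (enc g s.-1).
Proof.
rewrite /mu (@PW_split _ _ _ T0 psi j T0 T); last by lia.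
rewrite mulrA; congr (_ * _ * _); apply: PW_ext => // m hm.
by rewrite /enc /hpre ifT //; lia.
Qed.

Definition beta (x : 'I_K) (g2 : {ffun 'I_(T - T0) -> 'I_K}) :=
  \prod_(T0.+1 <= s < T.+1) q0_ psi j s (encx x g2 s) (encx x g2 s.-1).

Lemma mu_fact0 g1 g2 : mu T0 psi j T (enc (g1, g2)) false =
  mu T0 psi j T0 (hpre g1) false * beta (lastf g1) g2.
Proof.
rewrite mu_split /=; congr (_ * _); apply: eq_big_nat => s hs.
rewrite /rr /= /enc /encx /=.
have -> : (s <= T0)%N = false by lia.
case: (boolP (s.-1 <= T0)%N) => // c.
by rewrite /lastf; do 2 f_equal; lia.
Qed.

Section P1t.
Variable t : nat.
Hypothesis ht : (T0 < t <= T)%N.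

Definition oh (x : 'I_K) : 'rV[R]_K := onehot x.
Definition v (E : pred (Om M)) : 'rV[R]_K := \sum_(w | E w) Pm M w *: oh (X0m M t w).
Definition S x := \sum_g2 beta x g2.
Definition W x : 'rV[R]_K := \sum_g2 beta x g2 *: oh (getf x0 g2 (t - T0.+1)).
Definition a g1 := mu T0 psi j T0 (hpre g1) false.
Definition hC g1 := fun w => (pre w == g1) && ((Dm M w == false) && (Zm M w == j)).
Definition xC x := fun w => (lastf (pre w) == x) && ((Dm M w == false) && (Zm M w == j)).

Lemma Xobs_D0 w : Dm M w = false -> Xobs T0 M t w = X0m M t w.
Proof. by move=> hD; rewrite /Xobs hD ifF //; lia. Qed.

Lemma Pr_hC g1 : Pr M (hC g1) = a g1 * S (lastf g1).
Proof.
rewrite /hC (Pr_slice (pred1 g1) false) big_pred1_eq /S mulr_sumr.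
by apply: eq_bigr => g2 _; rewrite mu_fact0.
Qed.

Lemma v_hC g1 : v (hC g1) = a g1 *: W (lastf g1).
Proof.
rewrite /v /hC.
transitivity (\sum_(w | pred1 g1 (pre w) && ((Dm M w == false) && (Zm M w == j)))
   Pm M w *: (fun g2 => oh (getf x0 g2 (t - T0.+1))) (suf w)).
  apply: eq_bigr => w /andP [_ /andP [/eqP hD _]].
  by rewrite /= -Xobs_suf // Xobs_D0.
etransitivity; first by apply: (push_slice (pred1 g1) (fun g2 => oh (getf x0 g2 (t - T0.+1))) false).
rewrite big_pred1_eq /W scaler_sumr; apply: eq_bigr => g2 _.
by rewrite mu_fact0 scalerA.
Qed.

Lemma Pr_xC x : Pr M (xC x) = (\sum_(g1 | lastf g1 == x) a g1) * S x.
Proof.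
rewrite /xC (Pr_slice (fun g1 => lastf g1 == x) false) mulr_suml.
apply: eq_bigr => g1 /eqP <-; rewrite /S mulr_sumr.
by apply: eq_bigr => g2 _; rewrite mu_fact0.
Qed.

Lemma v_xC x : v (xC x) = (\sum_(g1 | lastf g1 == x) a g1) *: W x.
Proof.
rewrite /v /xC.
transitivity (\sum_(w | (fun g1 => lastf g1 == x) (pre w) && ((Dm M w == false) && (Zm M w == j)))
   Pm M w *: (fun g2 => oh (getf x0 g2 (t - T0.+1))) (suf w)).
  apply: eq_bigr => w /andP [_ /andP [/eqP hD _]].
  by rewrite /= -Xobs_suf // Xobs_D0.
etransitivity; first by apply: (push_slice (fun g1 => lastf g1 == x) (fun g2 => oh (getf x0 g2 (t - T0.+1))) false).
rewrite scaler_suml; apply: eq_bigr => g1 /eqP <-.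
rewrite /W scaler_sumr; apply: eq_bigr => g2 _.
by rewrite mu_fact0 scalerA.
Qed.


Hypothesis Hcs : common_support T0 M.
Hypothesis Htr : trans_indep T0 T M.

Lemma cs_pos g1 d : 0 < Pr M (fun w => (pre w == g1) && ((Dm M w == d) && (Zm M w == j))).
Proof.
case: Hcs => e [e0 He]; have := He (hpre g1) j; rewrite /cPr.
set A := Pr M (fun w => (pre w == g1) && ((Dm M w == true) && (Zm M w == j))).
set B0 := Pr M (fun w => (pre w == g1) && ((Dm M w == false) && (Zm M w == j))).
have -> : Pr M (fun w => Dm M w && (hist (Xobs T0 M) T0 (hpre g1) w && (Zm M w == j))) = A.
  by apply: Pr_ext => w; rewrite hist_hpre; case: (Dm M w); rewrite /= ?andbF.
have -> : Pr M (fun w => hist (Xobs T0 M) T0 (hpre g1) w && (Zm M w == j)) = A + B0.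
  rewrite (Pr_split _ (fun w => Dm M w)); congr (_ + _); apply: Pr_ext => w;
  by rewrite hist_hpre; case: (Dm M w); rewrite /= ?andbF ?andbT.
have A0 : 0 <= A by apply: Pr_ge0.
have B00 : 0 <= B0 by apply: Pr_ge0.
move=> /andP [h1 h2].
have nz : A + B0 != 0.
  apply/negP => /eqP h; move: h1; rewrite h invr0 mulr0 => h1; lra.
have eA : A = A / (A + B0) * (A + B0) by rewrite divfK.
set c := A / (A + B0) in h1 h2 eA.
have pos : 0 < A + B0 by rewrite lt_def nz /=; lra.
by case: d; rewrite -/A -/B0; nra.
Qed.

Definition hB g1 := fun w => (pre w == g1) && ((Dm M w == true) && (Zm M w == j)).
Definition xB x := fun w => (lastf (pre w) == x) && ((Dm M w == true) && (Zm M w == j)).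
Definition Bev := fun w => (Dm M w == true) && (Zm M w == j).

Lemma v_part E : v E = \sum_y Pr M (fun w => E w && (X0m M t w == y)) *: oh y.
Proof.
rewrite /v (partition_big (fun w => X0m M t w) predT) //=; apply: eq_bigr => y _.
by rewrite /Pr scaler_suml; apply: eq_bigr => w /andP [_ /eqP ->].
Qed.

Lemma K2 g1 : v (hB g1) = (Pr M (hB g1) / Pr M (hC g1)) *: v (hC g1).
Proof.
rewrite !v_part scaler_sumr; apply: eq_bigr => y _; rewrite scalerA; congr (_ *: _).
have TI := Htr ht y (hpre g1) j; rewrite /cPr in TI.
have -> : Pr M (fun w => hB g1 w && (X0m M t w == y)) =
  Pr M (fun w => (X0m M t w == y) && [&& hist (Xobs T0 M) T0 (hpre g1) w, Dm M w & Zm M w == j]).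
  by apply: Pr_ext => w; rewrite hist_hpre /hB; case: (pre w == g1); case: (Dm M w); case: (X0m M t w == y); case: (Zm M w == j).
have -> : Pr M (fun w => hC g1 w && (X0m M t w == y)) =
  Pr M (fun w => (X0m M t w == y) && [&& hist (Xobs T0 M) T0 (hpre g1) w, ~~ Dm M w & Zm M w == j]).
  by apply: Pr_ext => w; rewrite hist_hpre /hC; case: (pre w == g1); case: (Dm M w); case: (X0m M t w == y); case: (Zm M w == j).
have -> : Pr M (hB g1) = Pr M (fun w => [&& hist (Xobs T0 M) T0 (hpre g1) w, Dm M w & Zm M w == j]).
  by apply: Pr_ext => w; rewrite hist_hpre /hB; case: (pre w == g1); case: (Dm M w); case: (Zm M w == j).
have -> : Pr M (hC g1) = Pr M (fun w => [&& hist (Xobs T0 M) T0 (hpre g1) w, ~~ Dm M w & Zm M w == j]).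
  by apply: Pr_ext => w; rewrite hist_hpre /hC; case: (pre w == g1); case: (Dm M w); case: (Zm M w == j).
move: TI.
set PyC := Pr M (fun w => (X0m M t w == y) && _).
set PyB := Pr M (fun w => (X0m M t w == y) && _).
set PC := Pr M (fun w => [&& _, ~~ Dm M w & _]).
set PB := Pr M (fun w => [&& _, Dm M w & _]).
move=> TI.
have [PB0|PBn] := eqVneq PB 0.
  have h2 : PyB <= PB by apply: Pr_sub => w /andP [].
  have h1 : 0 <= PyB by apply: Pr_ge0.
  rewrite PB0 in h2; have -> : PyB = 0 by apply: le_anti; rewrite h1 h2.
  by rewrite PB0 !mul0r.
by rewrite -[PyB](divfK PBn) -TI; ring.
Qed.

Lemma lastf_cst x : lastf [ffun _ : 'I_T0 => x] = x.
Proof. have hi : (T0.-1 < T0)%N by lia. by rewrite /lastf (getf_lt _ _ hi) ffunE. Qed.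

Lemma Pr_xB x : Pr M (xB x) = \sum_(g1 | lastf g1 == x) Pr M (hB g1).
Proof.
rewrite /Pr (partition_big pre (fun g1 => lastf g1 == x)) => [|w /andP [hx _]] //.
apply: eq_bigr => g1 hl; apply: eq_bigl => w; rewrite /xB /hB.
by case: (eqVneq (pre w) g1) => [->|ne]; rewrite ?hl ?eqxx ?(negbTE ne) ?andbF ?andbT.
Qed.

Lemma hC_pos g1 : 0 < Pr M (hC g1).
Proof. exact: (cs_pos g1 false). Qed.

Lemma Key : v Bev = \sum_x Pr M (xB x) *: ((Pr M (xC x))^-1 *: v (xC x)).
Proof.
rewrite {1}/v (partition_big pre predT) //=.
transitivity (\sum_g1 Pr M (hB g1) *: ((S (lastf g1))^-1 *: W (lastf g1))).
  apply: eq_bigr => g1 _.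
  transitivity (v (hB g1)); first by apply: eq_bigl => w; rewrite /hB /Bev andbC.
  rewrite K2 v_hC Pr_hC [RHS]scalerA scalerA; congr (_ *: _).
  have := hC_pos g1; rewrite Pr_hC => /lt0r_neq0; rewrite mulf_eq0 negb_or => /andP [an Sn].
  by field; rewrite an Sn.
rewrite (partition_big (fun g1 => lastf g1) predT) //=; apply: eq_bigr => x _.
rewrite Pr_xB scaler_suml.
transitivity (\sum_(g1 | lastf g1 == x) Pr M (hB g1) *: ((S x)^-1 *: W x)).
  by apply: eq_bigr => g1 /eqP ->.
apply: eq_bigr => g1 _; congr (_ *: _).
have hpos := hC_pos [ffun _ => x]; rewrite Pr_hC lastf_cst in hpos.
have Sn : S x != 0 by move/lt0r_neq0: hpos; rewrite mulf_eq0 negb_or => /andP [].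
have xpos : 0 < Pr M (xC x).
  apply: (lt_le_trans (hC_pos [ffun _ => x])); apply: Pr_sub => w /andP [/eqP e r].
  by rewrite /xC e lastf_cst eqxx r.
rewrite v_xC Pr_xC in xpos *; rewrite scalerA; congr (_ *: _).
move/lt0r_neq0: xpos; rewrite mulf_eq0 negb_or => /andP [an _].
by field; rewrite an Sn.
Qed.


Lemma Xobs_D1 w : Dm M w = true -> Xobs T0 M t w = X1m M t w.
Proof. by move=> hD; rewrite /Xobs hD ifF //; lia. Qed.

Definition u1 x : 'rV[R]_K := \sum_(w | xB x w) Pm M w *: oh (X1m M t w).

Lemma part1_gen :
  LTATT M t j =
  \sum_(x : 'I_K)
     cPr M (fun w => Xobs T0 M T0 w == x) (fun w => Dm M w && (Zm M w == j)) *: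
     (cE M (fun w => onehot (Xobs T0 M t w))
           (fun w => [&& Xobs T0 M T0 w == x, Dm M w & Zm M w == j])
    - cE M (fun w => onehot (Xobs T0 M t w))
           (fun w => [&& Xobs T0 M T0 w == x, ~~ Dm M w & Zm M w == j])).
Proof.
set PB := Pr M (fun w => Dm M w && (Zm M w == j)).
have ePB : PB = Pr M Bev by apply: Pr_ext => w; rewrite /Bev; case: (Dm M w).
have eB x : Pr M (fun w => (Xobs T0 M T0 w == x) && (Dm M w && (Zm M w == j))) = Pr M (xB x).
  by apply: Pr_ext => w; rewrite /xB Xobs_T0; case: (Dm M w).
transitivity (PB^-1 *: (\sum_x u1 x - \sum_x Pr M (xB x) *: ((Pr M (xC x))^-1 *: v (xC x)))); last first.
  rewrite -sumrB scaler_sumr; apply: eq_bigr => x _.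
  rewrite /cPr /cE eB.
  have -> : Pr M (fun w => [&& Xobs T0 M T0 w == x, ~~ Dm M w & Zm M w == j]) = Pr M (xC x).
    by apply: Pr_ext => w; rewrite /xC Xobs_T0; case: (Dm M w).
  have -> : \sum_(w | [&& Xobs T0 M T0 w == x, Dm M w & Zm M w == j])
      Pm M w *: onehot (Xobs T0 M t w) = u1 x.
    apply: eq_big => w; first by rewrite /xB Xobs_T0; case: (Dm M w).
    by move=> /and3P [_ hD _]; rewrite Xobs_D1.
  have -> : \sum_(w | [&& Xobs T0 M T0 w == x, ~~ Dm M w & Zm M w == j])
      Pm M w *: onehot (Xobs T0 M t w) = v (xC x).
    apply: eq_big => w; first by rewrite /xC Xobs_T0; case: (Dm M w).
    by move=> /and3P [_ hD _]; rewrite Xobs_D0 //; apply: negbTE.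
  rewrite -/PB; have [e0|nz] := eqVneq (Pr M (xB x)) 0.
    have -> : u1 x = 0 by apply: Pr0_sum.
    by rewrite e0 !(mul0r, scale0r, scaler0, subr0, sub0r, oppr0).
  rewrite !scalerBr !scalerA; congr (_ *: _ - _ *: _); last by ring.
  by rewrite mulrAC divff // mul1r.
rewrite -Key /LTATT /cE -/PB; congr (_ *: _).
under eq_bigr do rewrite scalerBr.
rewrite sumrB; congr (_ - _).
  rewrite (partition_big (fun w => lastf (pre w)) predT) //=; apply: eq_bigr => x _.
  apply: eq_bigl => w; rewrite /xB.
  by case: (Dm M w); case: (Zm M w == j); case: (lastf (pre w) == x).
by apply: eq_bigl => w; rewrite /Bev; case: (Dm M w).
Qed.
End P1t.

Lemma mu_T0_nz (Hcs : common_support T0 M) h d : mu T0 psi j T0 h d != 0.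
Proof.
have := cs_pos Hcs [ffun i : 'I_T0 => h i.+1] d.
rewrite (Pr_slice (pred1 _) d) big_pred1_eq.
under eq_bigr do rewrite mu_split /=.
rewrite -mulr_sumr => /lt0r_neq0; rewrite mulf_eq0 negb_or => /andP [nz _].
move: nz; congr (_ != _); rewrite /mu; congr (_ * _); apply: PW_ext => // m hm.
have hi : (m.-1 < T0)%N by lia.
by rewrite /hpre (getf_lt _ _ hi) ffunE /=; congr h; lia.
Qed.
End P1.

Definition lawPr (psi : param R K J) (F : 'I_J -> PT -> bool -> bool) : R :=
  \sum_j \sum_(g : PT) \sum_(d : bool) (if F j g d then mu T0 psi j T (enc g) d else 0).
Definition lawS (psi : param R K J) t (F : 'I_J -> PT -> bool -> bool) : 'rV[R]_K :=
  \sum_j \sum_(g : PT) \sum_(d : bool)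
     (if F j g d then mu T0 psi j T (enc g) d *: oh (getf x0 g.2 (t - T0.+1)) else 0).
Definition FxB (j : 'I_J) x := fun (j' : 'I_J) (g : PT) (d : bool) => (lastf g.1 == x) && (d && (j' == j)).
Definition FxC (j : 'I_J) x := fun (j' : 'I_J) (g : PT) (d : bool) => (lastf g.1 == x) && (~~ d && (j' == j)).
Definition FB (j : 'I_J) := fun (j' : 'I_J) (g : PT) (d : bool) => d && (j' == j).
Definition rhs_law psi t j : 'rV[R]_K :=
  \sum_x (lawPr psi (FxB j x) / lawPr psi (FB j)) *:
     ((lawPr psi (FxB j x))^-1 *: lawS psi t (FxB j x)
      - (lawPr psi (FxC j x))^-1 *: lawS psi t (FxC j x)).

Lemma Pr_law psi (Hg : generated_by T0 T M psi) F :
  Pr M (fun w => F (Zm M w) (pre w, suf w) (Dm M w)) = lawPr psi F.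
Proof.
have H := push (V := R^o) (fun j g d => if F j g d then (1 : R^o) else 0) Hg.
rewrite /Pr big_mkcond /=; transitivity (\sum_w (Pm M w *: (if F (Zm M w) (pre w, suf w) (Dm M w) then (1 : R^o) else 0))).
  by apply: eq_bigr => w _; case: ifP => _; rewrite /GRing.scale /= ?mulr1 ?mulr0.
rewrite H; apply: eq_bigr => j _; apply: eq_bigr => g _; apply: eq_bigr => d _.
by case: ifP => _; rewrite /GRing.scale /= ?mulr1 ?mulr0.
Qed.

Lemma S_law psi (Hg : generated_by T0 T M psi) t (ht : (T0 < t <= T)%N) F :
  \sum_(w | F (Zm M w) (pre w, suf w) (Dm M w)) Pm M w *: oh (Xobs T0 M t w) = lawS psi t F.
Proof.
have H := push (fun j g d => if F j g d then oh (getf x0 g.2 (t - T0.+1)) else 0) Hg.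
rewrite big_mkcond /=; transitivity (\sum_w (Pm M w *: (if F (Zm M w) (pre w, suf w) (Dm M w) then oh (getf x0 (suf w) (t - T0.+1)) else 0))).
  by apply: eq_bigr => w _; case: ifP => _; rewrite ?scaler0 // Xobs_suf.
rewrite H; apply: eq_bigr => j _; apply: eq_bigr => g _; apply: eq_bigr => d _.
by case: ifP => _; rewrite ?scaler0.
Qed.

Lemma rhs_lawP psi (Hg : generated_by T0 T M psi) t (ht : (T0 < t <= T)%N) (j : 'I_J) :
  \sum_(x : 'I_K)
     cPr M (fun w => Xobs T0 M T0 w == x) (fun w => Dm M w && (Zm M w == j)) *:
     (cE M (fun w => onehot (Xobs T0 M t w))
           (fun w => [&& Xobs T0 M T0 w == x, Dm M w & Zm M w == j])
    - cE M (fun w => onehot (Xobs T0 M t w))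
           (fun w => [&& Xobs T0 M T0 w == x, ~~ Dm M w & Zm M w == j]))
  = rhs_law psi t j.
Proof.
apply: eq_bigr => x _; rewrite /cPr /cE.
have e1 : Pr M (fun w => (Xobs T0 M T0 w == x) && (Dm M w && (Zm M w == j))) = lawPr psi (FxB j x).
  rewrite -(Pr_law Hg); apply: Pr_ext => w; by rewrite /FxB /= Xobs_T0.
have e2 : Pr M (fun w => Dm M w && (Zm M w == j)) = lawPr psi (FB j).
  by rewrite -(Pr_law Hg).
have e3 : Pr M (fun w => [&& Xobs T0 M T0 w == x, ~~ Dm M w & Zm M w == j]) = lawPr psi (FxC j x).
  rewrite -(Pr_law Hg); apply: Pr_ext => w; by rewrite /FxC /= Xobs_T0.
have e4 : \sum_(w | [&& Xobs T0 M T0 w == x, Dm M w & Zm M w == j]) Pm M w *: onehot (Xobs T0 M t w)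
   = lawS psi t (FxB j x).
  rewrite -(S_law Hg ht); apply: eq_bigl => w; by rewrite /FxB /= Xobs_T0.
have e5 : \sum_(w | [&& Xobs T0 M T0 w == x, ~~ Dm M w & Zm M w == j]) Pm M w *: onehot (Xobs T0 M t w)
   = lawS psi t (FxC j x).
  rewrite -(S_law Hg ht); apply: eq_bigl => w; by rewrite /FxC /= Xobs_T0.
by rewrite e1 e2 e3 e4 e5.
Qed.

Lemma rhs_law_eq psi psi' t j :
  (forall j g d, mu T0 psi j T (enc g) d = mu T0 psi' j T (enc g) d) ->
  rhs_law psi t j = rhs_law psi' t j.
Proof.
move=> E.
have eP F : lawPr psi F = lawPr psi' F.
  by apply: eq_bigr => j' _; apply: eq_bigr => g _; apply: eq_bigr => d _; rewrite E.
have eS F : lawS psi t F = lawS psi' t F.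
  by apply: eq_bigr => j' _; apply: eq_bigr => g _; apply: eq_bigr => d _; rewrite E.
by rewrite /rhs_law; apply: eq_bigr => x _; rewrite !eP !eS.
Qed.
End Model.

Section MxHelp.
Variables (F : fieldType) (n : nat).
Implicit Types (A : 'M[F]_n).

Lemma row_nz A i : A \in unitmx -> exists j, A i j != 0.
Proof.
move=> U; case: (pickP (fun j => A i j != 0)) => [j hj|H]; first by exists j.
have := mulmxV U; move/matrixP/(_ i i); rewrite !mxE eqxx /= big1 => [|j _].
  by move/eqP; rewrite eq_sym oner_eq0.
by move/negbFE/eqP: (H j) => ->; rewrite mul0r.
Qed.

Lemma col_nz A j : A \in unitmx -> exists i, A i j != 0.
Proof.
move=> U; case: (pickP (fun i => A i j != 0)) => [i hi|H]; first by exists i.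
have := mulVmx U; move/matrixP/(_ j j); rewrite !mxE eqxx /= big1 => [|i _].
  by move/eqP; rewrite eq_sym oner_eq0.
by move/negbFE/eqP: (H i) => ->; rewrite mulr0.
Qed.

Lemma vec_zero A (v : 'I_n -> F) : A \in unitmx ->
  (forall l, \sum_j A l j * v j = 0) -> forall j, v j = 0.
Proof.
move=> U H j.
have e : A *m (\col_j v j) = 0.
  by apply/matrixP => l i; rewrite !mxE -[RHS](H l); apply: eq_bigr => j' _; rewrite mxE.
have := congr1 (mulmx (invmx A)) e; rewrite mulKmx // mulmx0 => /matrixP/(_ j ord0).
by rewrite !mxE.
Qed.

Lemma col_distinct A j1 j2 : A \in unitmx -> j1 != j2 -> exists i, A i j1 != A i j2.
Proof.
move=> U ne; case: (pickP (fun i => A i j1 != A i j2)) => [i hi|H]; first by exists i.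
move: U; rewrite unitmxE -det_tr (determinant_alternate (A := A^T) ne).
  by rewrite unitr0.
by move=> i; rewrite !mxE; apply/eqP; apply/negbFE: (H i).
Qed.

Lemma diag_unit (d : 'rV[F]_n) : (forall i, d 0 i != 0) -> diag_mx d \in unitmx.
Proof.
move=> H; rewrite unitmxE det_diag unitfE; apply/prodf_neq0 => i _; exact: H.
Qed.

Lemma diag_unit_nz (d : 'rV[F]_n) : diag_mx d \in unitmx -> forall i, d 0 i != 0.
Proof.
rewrite unitmxE det_diag unitfE => /prodf_neq0 H i; exact: H.
Qed.

Lemma invmx_diag (d : 'rV[F]_n) : (forall i, d 0 i != 0) ->
  invmx (diag_mx d) = diag_mx (\row_i (d 0 i)^-1).
Proof.
move=> H; have U := diag_unit H.
have E : diag_mx d *m diag_mx (\row_i (d 0 i)^-1) = 1%:M.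
  rewrite mulmx_diag; apply/matrixP => i j; rewrite !mxE.
  by case: eqP => [->|]; rewrite ?mulr0n ?mulr1n // divff.
by rewrite -[LHS]mulmx1 -E mulKmx.
Qed.

End MxHelp.

Lemma incr_ge (n : nat) (f : 'I_n -> 'I_n) :
  (forall i j : 'I_n, (i < j)%N -> (f i < f j)%N) -> forall j : 'I_n, (j <= f j)%N.
Proof.
move=> inc j; case: j => m hm /=.
elim: m hm => [|m IH] hm //.
have hm' : (m < n)%N by lia.
have := inc (Ordinal hm') (Ordinal hm) (ltnSn m).
have := IH hm'; lia.
Qed.

Lemma incr_id (n : nat) (f : 'I_n -> 'I_n) : injective f ->
  (forall i j : 'I_n, (i < j)%N -> (f i < f j)%N) -> forall j, f j = j.
Proof.
move=> finj inc j.
have [g fK gK] := injF_bij finj.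
have ginc : forall i j : 'I_n, (i < j)%N -> (g i < g j)%N.
  move=> i0 j0 lt; rewrite ltnNge; apply/negP => le.
  case: (ltngtP (g j0) (g i0)) le => // [lt'|eq'] _.
    by have := inc _ _ lt'; rewrite !gK; lia.
  by have := congr1 f (val_inj eq'); rewrite !gK => e; move: lt; rewrite e ltnn.
apply: val_inj; apply/eqP; rewrite eqn_leq (incr_ge inc) andbT.
by have := incr_ge ginc (f j); rewrite fK.
Qed.

Definition splice {K : nat} (n : nat) (a b : nat -> 'I_K) : nat -> 'I_K :=
  fun m => if (m <= n)%N then a m else b m.


Section Ident.
Variables (R : realFieldType) (K J T0 T k : nat) (eps : R).
Variables (psi psi' : param R K J).
Hypotheses (hT0 : (1 <= T0)%N) (hT : (T0 < T)%N) (hk : (1 <= k)%N)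
  (hkT0 : (k.+1 <= T0)%N) (hkT : (2 * k.+1 <= T)%N).
Hypothesis Ht : in_Theta T0 T eps psi.
Hypothesis Ht' : in_Theta T0 T eps psi'.
Hypothesis Hdat : forall h d, Dat T0 psi T h d = Dat T0 psi' T h d.

Implicit Types (p : param R K J) (h : nat -> 'I_K).

Lemma mu_ext p j n h h' d : (1 <= n)%N -> (forall m, (1 <= m <= n)%N -> h m = h' m) ->
  mu T0 p j n h d = mu T0 p j n h' d.
Proof. by move=> hn e; rewrite /mu (PW_ext _ _ _ _ hn e). Qed.

Lemma mu_k p j h d : mu T0 p j k h d = pi_ p j * P1 k p j h d.
Proof.
rewrite /mu /PW /P1; congr (_ * (_ * _)); apply: eq_big_nat => s hs.
by rewrite /rr; case: d => //=; rewrite ifF //; lia.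
Qed.

Lemma mu_k1 p j h d : mu T0 p j k.+1 h d = mu T0 p j k h d * q21 k p j (h k.+1) h.
Proof.
by rewrite /mu PW_S // mulrA /rr /q21; case: d => //=; rewrite ifF //; lia.
Qed.

Lemma mu_k2 p j h : mu T0 p j k.+2 h false = mu T0 p j k.+1 h false * q32 k p j (h k.+2) (h k.+1).
Proof. by rewrite /mu PW_S // mulrA. Qed.

Lemma mu_Tf p j h : mu T0 p j T h false = mu T0 p j k.+2 h false * q43 T k p j h (h k.+2).
Proof.
rewrite /mu (@PW_split _ _ _ T0 p j k.+2 T); last by lia.
rewrite mulrA; congr (_ * _); apply: eq_big_nat => s hs.
by rewrite /rr /=; case: eqP => // ->.
Qed.

Definition Rr p j h := \prod_(k.+2 <= s < T.+1) rr T0 p j true s (h s) (h s.-1).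

Lemma mu_Tt p j h : mu T0 p j T h true = mu T0 p j k.+1 h true * Rr p j h.
Proof. by rewrite /mu (@PW_split _ _ _ T0 p j k.+1 T) ?mulrA //; lia. Qed.

Lemma q43_ext p j h h' x : (forall m, (k.+3 <= m <= T)%N -> h m = h' m) ->
  q43 T k p j h x = q43 T k p j h' x.
Proof.
move=> e; apply: eq_big_nat => s hs; rewrite e //; case: eqP => // ne.
by rewrite e //; case: s hs ne => //= s; lia.
Qed.

Lemma Rr_ext p j h h' : (forall m, (k.+1 <= m <= T)%N -> h m = h' m) -> Rr p j h = Rr p j h'.
Proof.
by move=> e; apply: eq_big_nat => s hs; rewrite !e //; case: s hs => //= s; lia.
Qed.

Lemma P1_ext p j h h' d : (forall m, (1 <= m <= k)%N -> h m = h' m) -> P1 k p j h d = P1 k p j h' d.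
Proof.
move=> e; rewrite /P1 e ?hk //; congr (_ * _); apply: eq_big_nat => s hs.
by rewrite !e //; case: s hs => [|[|s]] //=; lia.
Qed.


Lemma Dat_all n : (1 <= n <= T)%N -> forall h d, Dat T0 psi n h d = Dat T0 psi' n h d.
Proof.
move=> hn; apply: (down_eq (T := T)) => // [n' h d hn'|n' h d hn'].
  exact: (Dat_marg h d Ht).
exact: (Dat_marg h d Ht').
Qed.

Definition u (p : param R K J) (j : 'I_J) (h : nat -> 'I_K) := mu T0 p j k.+2 h false.

Section Setting.
Variables (xi2c xi2b xi3 xi3b xi3x : 'I_K) (a : 'I_J -> nat -> 'I_K) (b : nat -> nat -> 'I_K).
Hypotheses (HLc : Lbar k psi a xi2c \in unitmx) (HLb : Lbar k psi a xi2b \in unitmx).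
Hypotheses (HL3 : Lmat T k psi b xi3 \in unitmx) (HL3b : Lmat T k psi b xi3b \in unitmx)
  (HL3x : Lmat T k psi b xi3x \in unitmx).
Hypothesis Hq32 : forall j x3 x2, 0 < q32 k psi j x3 x2.

Definition Ut (p : param R K J) x2 : 'M[R]_J := \matrix_(i, j) (pi_ p j * P1 k p j (a i) false * q21 k p j x2 (a i)).
Definition hh x2 (beta : nat -> 'I_K) (i : 'I_J) := splice k (a i) (splice k.+1 (fun _ => x2) beta).
Definition Atil (p : param R K J) x2 x3 : 'M[R]_J := \matrix_(i, l)
  (if (l == 0 :> nat) then Dat T0 p k.+2 (hh x2 (splice k.+2 (fun _ => x3) (b l)) i) false
   else Dat T0 p T (hh x2 (splice k.+2 (fun _ => x3) (b l)) i) false).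

Lemma hh_k2 x2 beta i : hh x2 beta i k.+2 = beta k.+2.
Proof. by rewrite /hh /splice ifF ?ifF //; lia. Qed.

Lemma hh_big x2 beta i m : (k.+2 <= m)%N -> hh x2 beta i m = beta m.
Proof. by move=> hm; rewrite /hh /splice ifF ?ifF //; lia. Qed.

Lemma u_hh (p : param R K J) j x2 beta i :
  mu T0 p j k.+2 (hh x2 beta i) false = Ut p x2 i j * q32 k p j (beta k.+2) x2.
Proof.
rewrite mu_k2 mu_k1 mu_k mxE.
have e1 : hh x2 beta i k.+2 = beta k.+2 by rewrite /hh /splice; rewrite ifF ?ifF //; lia.
have e2 : hh x2 beta i k.+1 = x2 by rewrite /hh /splice ifF ?ifT //; lia.
rewrite e1 e2; congr (_ * _ * _).
  by congr (_ * _); apply: P1_ext => m hm; rewrite /hh /splice ifT //; lia.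
by rewrite /q21 /hh /splice ifT.
Qed.

Lemma Atil_fact (p : param R K J) x2 x3 :
  Atil p x2 x3 = Ut p x2 *m Dmat k p x3 x2 *m (Lmat T k p b x3)^T.
Proof.
apply/matrixP => i l; rewrite /Atil /Dmat mul_mx_diag !mxE.
case: ifP => l0.
  by rewrite /Dat; apply: eq_bigr => j _; rewrite u_hh !mxE l0 mulr1 /splice leqnn.
rewrite /Dat; apply: eq_bigr => j _; rewrite mu_Tf u_hh !mxE l0 /splice leqnn.
congr (_ * _); rewrite hh_k2 /splice leqnn; apply: q43_ext => m hm.
by rewrite hh_big ?ifF //; lia.
Qed.

Lemma Atil_eq x2 x3 : Atil psi x2 x3 = Atil psi' x2 x3.
Proof.
apply/matrixP => i l; rewrite !mxE; case: ifP => _; apply: Dat_all; lia.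
Qed.

Lemma Ut_unit x2 : Lbar k psi a x2 \in unitmx -> Ut psi x2 \in unitmx.
Proof.
move=> HL.
pose G i := \sum_m pi_ psi m * P1 k psi m (a i) false.
have GN i : G i != 0.
  have [j hj] := row_nz i HL; apply/negP => /eqP G0; move: hj.
  by rewrite mxE /lambda1 /tau -/(G i) G0 invr0 mulr0 mul0r eqxx.
have -> : Ut psi x2 = diag_mx (\row_i G i) *m Lbar k psi a x2.
  apply/matrixP => i j; rewrite mul_diag_mx !mxE /lambda1 /tau -/(G i).
  by field.
by rewrite unitmx_mul HL andbT; apply: diag_unit => i; rewrite mxE.
Qed.

Lemma Dmat_unit x3 x2 : Dmat k psi x3 x2 \in unitmx.
Proof. by apply: diag_unit => j; rewrite mxE lt0r_neq0. Qed.

Lemma Emat x2 x3 : Ut psi x2 *m Dmat k psi x3 x2 *m (Lmat T k psi b x3)^T =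
  Ut psi' x2 *m Dmat k psi' x3 x2 *m (Lmat T k psi' b x3)^T.
Proof. by rewrite -!Atil_fact Atil_eq. Qed.

Lemma unit3 (A B C : 'M[R]_J) : A *m B *m C \in unitmx ->
  [/\ A \in unitmx, B \in unitmx & C \in unitmx].
Proof. by rewrite !unitmx_mul => /andP [/andP [-> ->] ->]. Qed.

Lemma units' x2 x3 : Lbar k psi a x2 \in unitmx -> Lmat T k psi b x3 \in unitmx ->
  [/\ Ut psi' x2 \in unitmx, Dmat k psi' x3 x2 \in unitmx & (Lmat T k psi' b x3)^T \in unitmx].
Proof.
move=> HL HM; apply: unit3; rewrite -Emat !unitmx_mul Ut_unit // Dmat_unit.
by rewrite unitmx_tr.
Qed.

Lemma XDL x2 x3 : Lbar k psi a x2 \in unitmx -> Lmat T k psi b x3 \in unitmx ->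
  invmx (Ut psi' x2) *m Ut psi x2 *m Dmat k psi x3 x2 *m (Lmat T k psi b x3)^T =
  Dmat k psi' x3 x2 *m (Lmat T k psi' b x3)^T.
Proof.
move=> HL HM; have [U1 _ _] := units' HL HM.
by rewrite -!mulmxA [X in _ *m X]mulmxA Emat -mulmxA mulKmx.
Qed.

Lemma key_entry x2 x3 : Lbar k psi a x2 \in unitmx -> Lmat T k psi b x3 \in unitmx ->
  forall i j, (invmx (Ut psi' x2) *m Ut psi x2) i j * q32 k psi j x3 x2 =
    q32 k psi' i x3 x2 * ((Lmat T k psi' b x3)^T *m invmx ((Lmat T k psi b x3)^T)) i j.
Proof.
move=> HL HM i j.
have E := XDL HL HM.
have := congr1 (fun A => A *m invmx ((Lmat T k psi b x3)^T)) E.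
rewrite /= mulmxK ?unitmx_tr // => H.
have H2 : (invmx (Ut psi' x2) *m Ut psi x2) *m Dmat k psi x3 x2 =
   Dmat k psi' x3 x2 *m ((Lmat T k psi' b x3)^T *m invmx ((Lmat T k psi b x3)^T)).
  by rewrite H mulmxA.
move: H2.
set X := invmx (Ut psi' x2) *m Ut psi x2.
set W := (Lmat T k psi' b x3)^T *m invmx ((Lmat T k psi b x3)^T).
by rewrite /Dmat mul_mx_diag mul_diag_mx => /matrixP/(_ i j); rewrite !mxE.
Qed.

Hypothesis Hdist : let Mx := Dmat k psi xi3 xi2c *m invmx (Dmat k psi xi3b xi2c)
   *m Dmat k psi xi3b xi2b *m invmx (Dmat k psi xi3 xi2b) in
   forall j1 j2 : 'I_J, Mx j1 j1 = Mx j2 j2 -> j1 = j2.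

Definition mm (p : param R K J) j := q32 k p j xi3 xi2c / q32 k p j xi3b xi2c *
  q32 k p j xi3b xi2b / q32 k p j xi3 xi2b.

Lemma mm_inj j1 j2 : mm psi j1 = mm psi j2 -> j1 = j2.
Proof.
have nz x3 x2 : forall i, (\row_j q32 k psi j x3 x2) 0 i != 0.
  by move=> i; rewrite mxE lt0r_neq0.
move=> e; apply: Hdist; rewrite /Dmat !invmx_diag // !mulmx_diag !mxE !eqxx !mulr1n.
by [].
Qed.

Definition Xc := invmx (Ut psi' xi2c) *m Ut psi xi2c.

Lemma q32'_nz x3 x2 i : Lbar k psi a x2 \in unitmx -> Lmat T k psi b x3 \in unitmx ->
  q32 k psi' i x3 x2 != 0.
Proof.
move=> HL HM; have [_ D _] := units' HL HM.
by have := diag_unit_nz D i; rewrite mxE.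
Qed.

Lemma X_mm i j : Xc i j != 0 -> mm psi j = mm psi' i.
Proof.
move=> xnz.
have e1 := key_entry HLc HL3 i j.
have e2 := key_entry HLb HL3 i j.
have e3 := key_entry HLc HL3b i j.
have e4 := key_entry HLb HL3b i j.
rewrite -/Xc in e1 e3.
move: e1 e2 e3 e4.
set x := Xc i j; set z := (invmx (Ut psi' xi2b) *m Ut psi xi2b) i j.
set w3 := (_ *m invmx (Lmat T k psi b xi3)^T) i j.
set w3b := (_ *m invmx (Lmat T k psi b xi3b)^T) i j.
have n1 := q32'_nz i HLc HL3; have n2 := q32'_nz i HLb HL3.
have n3 := q32'_nz i HLc HL3b; have n4 := q32'_nz i HLb HL3b.
move: n1 n2 n3 n4.
set dc3' := q32 k psi' i xi3 xi2c; set db3' := q32 k psi' i xi3 xi2b.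
set dc3b' := q32 k psi' i xi3b xi2c; set db3b' := q32 k psi' i xi3b xi2b.
have m1 := lt0r_neq0 (Hq32 j xi3 xi2c); have m2 := lt0r_neq0 (Hq32 j xi3 xi2b).
have m3 := lt0r_neq0 (Hq32 j xi3b xi2c); have m4 := lt0r_neq0 (Hq32 j xi3b xi2b).
move: m1 m2 m3 m4.
set dc3 := q32 k psi j xi3 xi2c; set db3 := q32 k psi j xi3 xi2b.
set dc3b := q32 k psi j xi3b xi2c; set db3b := q32 k psi j xi3b xi2b.
move=> m1 m2 m3 m4 n1 n2 n3 n4 e1 e2 e3 e4.
have E : x * (dc3 * db3b * dc3b' * db3') = x * (dc3b * db3 * dc3' * db3b').
  have -> : x * (dc3 * db3b * dc3b' * db3') = (x * dc3) * (db3b * dc3b' * db3') by ring.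
  rewrite e1.
  have -> : dc3' * w3 * (db3b * dc3b' * db3') = dc3' * db3b * dc3b' * (db3' * w3) by ring.
  rewrite -e2.
  have -> : x * (dc3b * db3 * dc3' * db3b') = (x * dc3b) * (db3 * dc3' * db3b') by ring.
  rewrite e3.
  have -> : dc3b' * w3b * (db3 * dc3' * db3b') = dc3b' * db3 * dc3' * (db3b' * w3b) by ring.
  rewrite -e4; ring.
have {}E := mulfI xnz E.
rewrite /mm -/dc3 -/db3 -/dc3b -/db3b -/dc3' -/db3' -/dc3b' -/db3b'.
apply/eqP; rewrite -subr_eq0.
have -> : dc3 / dc3b * db3b / db3 - dc3' / dc3b' * db3b' / db3' =
  (dc3 * db3b * dc3b' * db3' - dc3b * db3 * dc3' * db3b') / (dc3b * db3 * dc3b' * db3').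
  by field; rewrite m2 m3 n2 n3.
by rewrite E subrr mul0r.
Qed.

Lemma X_unique i j j' : Xc i j != 0 -> Xc i j' != 0 -> j = j'.
Proof. by move=> h1 h2; apply: mm_inj; rewrite (X_mm h1) (X_mm h2). Qed.

Lemma Xc_unit : Xc \in unitmx.
Proof.
have [U _ _] := units' HLc HL3.
by rewrite /Xc unitmx_mul unitmx_inv U Ut_unit.
Qed.

Definition rho j := odflt j [pick i | Xc i j != 0].

Lemma rho_nz j : Xc (rho j) j != 0.
Proof.
rewrite /rho; case: pickP => [i hi //|H] /=.
by have [i hi] := col_nz j Xc_unit; move: (H i); rewrite hi.
Qed.

Lemma rho_inj : injective rho.
Proof.
move=> j1 j2 e; apply: (X_unique (rho_nz j1)); rewrite e; exact: rho_nz.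
Qed.

Lemma X_supp i j : Xc i j != 0 -> i = rho j.
Proof.
move=> nz; have /codomP [j' ej] := injF_onto rho_inj i.
rewrite ej in nz *; by rewrite (X_unique nz (rho_nz j')).
Qed.

Lemma entry_ADL (A : 'M[R]_J) (d : 'rV[R]_J) (B : 'M[R]_J) i l :
  (A *m diag_mx d *m B^T) i l = \sum_j A i j * d 0 j * B l j.
Proof. by rewrite mul_mx_diag !mxE; apply: eq_bigr => j _; rewrite !mxE. Qed.

Lemma entry_DL (d : 'rV[R]_J) (B : 'M[R]_J) i l :
  (diag_mx d *m B^T) i l = d 0 i * B l i.
Proof. by rewrite mul_diag_mx !mxE. Qed.

Lemma Lrel x3 : Lmat T k psi b x3 \in unitmx ->
  forall l j, Lmat T k psi' b x3 l (rho j) = Lmat T k psi b x3 l j.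
Proof.
move=> HM l j.
have o0 : (0 < J)%N by apply: leq_ltn_trans (leq0n _) (ltn_ord j).
have E := XDL HLc HM; rewrite -/Xc in E.
have ent l' : Xc (rho j) j * q32 k psi j x3 xi2c * Lmat T k psi b x3 l' j =
    q32 k psi' (rho j) x3 xi2c * Lmat T k psi' b x3 l' (rho j).
  move/matrixP: E => /(_ (rho j) l'); rewrite /Dmat entry_ADL entry_DL mxE => <-.
  rewrite (bigD1 j) //= [X in _ + X]big1 ?addr0 ?mxE //.
  move=> j' hj'.
  case: (eqVneq (Xc (rho j) j') 0) => [->|nz]; first by rewrite !mul0r.
  by move: hj'; rewrite (rho_inj (X_supp nz)) eqxx.
have L0 (p : param R K J) j' : Lmat T k p b x3 (Ordinal o0) j' = 1 by rewrite mxE.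
have e0 := ent (Ordinal o0); rewrite !L0 !mulr1 in e0.
have := ent l; rewrite e0 => e.
by apply: (mulfI (q32'_nz (rho j) HLc HM)); rewrite -e.
Qed.

Lemma Drow (p : param R K J) h x3 (l : 'I_J) : h k.+2 = x3 ->
  (if (l == 0 :> nat) then Dat T0 p k.+2 h false else Dat T0 p T (splice k.+2 h (b l)) false)
  = \sum_j u p j h * Lmat T k p b x3 l j.
Proof.
move=> hx; rewrite /Dat; case: ifP => l0; apply: eq_bigr => j _; rewrite mxE l0 ?mulr1 //.
rewrite mu_Tf /u; congr (_ * _).
  by apply: mu_ext => // m hm; rewrite /splice ifT //; lia.
rewrite /splice leqnn hx; apply: q43_ext => m hm; rewrite ifF //; lia.
Qed.

Lemma u_align x3 : Lmat T k psi b x3 \in unitmx -> forall h, h k.+2 = x3 ->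
  forall j, u psi j h = u psi' (rho j) h.
Proof.
move=> HM h hx.
suff H : forall j, u psi j h - u psi' (rho j) h = 0.
  by move=> j; apply/eqP; rewrite -subr_eq0 H.
apply: (vec_zero HM) => l.
have e : \sum_j u psi j h * Lmat T k psi b x3 l j = \sum_j u psi' j h * Lmat T k psi' b x3 l j.
  rewrite -(Drow psi l hx) -(Drow psi' l hx); case: ifP => _; apply: Dat_all; lia.
rewrite [RHS](reindex_inj rho_inj) /= in e.
have e2 : \sum_j u psi' (rho j) h * Lmat T k psi' b x3 l (rho j) =
    \sum_j u psi' (rho j) h * Lmat T k psi b x3 l j.
  by apply: eq_bigr => j _; rewrite (Lrel HM).
rewrite e2 in e.
rewrite -[RHS](subrr (\sum_j u psi j h * Lmat T k psi b x3 l j)) {2}e -sumrB.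
by apply: eq_bigr => j _; rewrite mulrBr mulrC [X in _ - X]mulrC.
Qed.

Lemma Uslice_unit x3 beta : beta k.+2 = x3 ->
  \matrix_(i, m) u psi m (hh xi2c beta i) \in unitmx.
Proof.
move=> hb.
have -> : \matrix_(i, m) u psi m (hh xi2c beta i) = Ut psi xi2c *m Dmat k psi x3 xi2c.
  by apply/matrixP => i m; rewrite /Dmat mul_mx_diag !mxE /u u_hh hb !mxE.
by rewrite unitmx_mul Ut_unit // Dmat_unit.
Qed.

Lemma step3_local (sg : 'I_J -> 'I_J) : injective sg ->
  (forall j h, u psi j h = u psi' (sg j) h) ->
  forall h, h k.+2 = xi3 -> forall j, q43 T k psi j h xi3 = q43 T k psi' (sg j) h xi3.
Proof.
move=> sinj Hu h hx.
have eq43 (p : param R K J) j i : q43 T k p j (hh xi2c h i) (hh xi2c h i k.+2) = q43 T k p j h xi3.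
  rewrite hh_k2 hx; apply: q43_ext => m hm; rewrite hh_big //; lia.
suff H : forall j, q43 T k psi j h xi3 - q43 T k psi' (sg j) h xi3 = 0.
  by move=> j; apply/eqP; rewrite -subr_eq0 H.
apply: (vec_zero (Uslice_unit hx)) => i.
have e : Dat T0 psi T (hh xi2c h i) false = Dat T0 psi' T (hh xi2c h i) false by apply: Dat_all; lia.
rewrite /Dat [RHS](reindex_inj sinj) /= in e.
under eq_bigr do rewrite mxE.
rewrite -[RHS](subrr (\sum_j mu T0 psi' (sg j) T (hh xi2c h i) false)) -{1}e -sumrB.
apply: eq_bigr => j _; rewrite !mu_Tf -!/(u _ _ _) -Hu !eq43; ring.
Qed.

End Setting.

Definition IDa_setting (xi3 xi3x : 'I_K) :=
  exists (xi2c xi2b xi3b : 'I_K) (a : 'I_J -> nat -> 'I_K) (b : nat -> nat -> 'I_K),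
    [/\ Lbar k psi a xi2c \in unitmx /\ Lbar k psi a xi2b \in unitmx,
        Lmat T k psi b xi3 \in unitmx, Lmat T k psi b xi3x \in unitmx,
        Lmat T k psi b xi3b \in unitmx &
        let Mx := Dmat k psi xi3 xi2c *m invmx (Dmat k psi xi3b xi2c)
                  *m Dmat k psi xi3b xi2b *m invmx (Dmat k psi xi3 xi2b) in
        forall j1 j2 : 'I_J, Mx j1 j1 = Mx j2 j2 -> j1 = j2].

Hypothesis Hq32 : forall j x3 x2, 0 < q32 k psi j x3 x2.

Lemma step1 xi3 xi3x : IDa_setting xi3 xi3x ->
  exists rho : 'I_J -> 'I_J, injective rho /\
    forall h, (h k.+2 = xi3 \/ h k.+2 = xi3x) -> forall j, u psi j h = u psi' (rho j) h.
Proof.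
case=> xi2c [xi2b [xi3b [a [b [[HLc HLb] HL3 HLx HL3b Hd]]]]].
exists (rho xi2c a); split.
  exact: (rho_inj HLc HLb HL3 HL3b HLx Hq32 Hd).
move=> h [hx|hx] j.
  exact: (u_align HLc HLb HL3 HL3b HLx Hq32 Hd HL3 hx).
exact: (u_align HLc HLb HL3 HL3b HLx Hq32 Hd HLx hx).
Qed.

Lemma distinct_slice xi3 xi3x : IDa_setting xi3 xi3x -> forall j1 j2 : 'I_J, j1 != j2 ->
  exists h, h k.+2 = xi3 /\ u psi j1 h != u psi j2 h.
Proof.
case=> xi2c [xi2b [xi3b [a [b [[HLc HLb] HL3 HLx HL3b Hd]]]]] j1 j2 ne.
have U := Uslice_unit HLc HLb HL3 HL3b HLx Hq32 (x3 := xi3) (beta := fun _ => xi3) erefl.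
have [i hi] := col_distinct U ne; rewrite !mxE in hi.
exists (hh a xi2c (fun _ => xi3) i); split => //.
by rewrite /hh /splice ifF ?ifF //; lia.
Qed.

Lemma step3 (sg : 'I_J -> 'I_J) : injective sg ->
  (forall j h, u psi j h = u psi' (sg j) h) ->
  (forall x3, exists x3x, IDa_setting x3 x3x) ->
  forall j h, mu T0 psi j T h false = mu T0 psi' (sg j) T h false.
Proof.
move=> sinj Hu Hall j h.
have [x3x [xi2c [xi2b [xi3b [a [b [[HLc HLb] HL3 HLx HL3b Hd]]]]]]] := Hall (h k.+2).
rewrite !mu_Tf -!/(u _ _ _) Hu.
by rewrite (step3_local HLc HLb HL3 HL3b HLx Hq32 sinj Hu (h := h) erefl).
Qed.

Lemma D0_align : (exists xi3s, forall xi3, IDa_setting xi3 xi3s) ->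
  exists sg : 'I_J -> 'I_J, injective sg /\
    forall j h, mu T0 psi j T h false = mu T0 psi' (sg j) T h false.
Proof.
case=> xi3s Hall.
have [rs [rinj Hs]] := step1 (Hall xi3s).
exists rs; split => //.
apply: step3 => //; last by move=> x3; exists xi3s.
move=> j h.
have [r [rinj' Hr]] := step1 (Hall (h k.+2)).
suff -> : rs j = r j by apply: Hr; left.
case: (eqVneq (rs j) (r j)) => // ne; exfalso.
have /codomP [j1 e1] := injF_onto rinj (r j).
have nj : j1 != j by apply/eqP => e; move: ne; rewrite e1 e eqxx.
have [h' [hx' hne]] := distinct_slice (Hall xi3s) nj.
move: hne; rewrite (Hs h' (or_introl hx')) -e1 -(Hr h' (or_intror hx')).
by rewrite eqxx.
Qed.

Hypothesis Hpos : forall j h d, mu T0 psi j T0 h d != 0.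

Lemma mu_k_nz j h d : mu T0 psi j k h d != 0.
Proof.
have := Hpos j h d; rewrite /mu (@PW_split _ _ _ T0 psi j k T0); last by lia.
by rewrite mulrA mulf_eq0 negb_or => /andP [].
Qed.

Lemma tau_unit (e : 'I_J -> nat -> 'I_K) x2 d :
  \matrix_(i, j) (tau k psi j (e i) d * q21 k psi j x2 (e i)) \in unitmx ->
  \matrix_(i, j) (pi_ psi j * P1 k psi j (e i) d * q21 k psi j x2 (e i)) \in unitmx.
Proof.
move=> HL.
pose G i := \sum_m pi_ psi m * P1 k psi m (e i) d.
have GN i : G i != 0.
  have [j hj] := row_nz i HL; apply/negP => /eqP G0; move: hj.
  by rewrite mxE /tau -/(G i) G0 invr0 mulr0 mul0r eqxx.
have -> : \matrix_(i, j) (pi_ psi j * P1 k psi j (e i) d * q21 k psi j x2 (e i)) =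
    diag_mx (\row_i G i) *m \matrix_(i, j) (tau k psi j (e i) d * q21 k psi j x2 (e i)).
  apply/matrixP => i j; rewrite mul_diag_mx !mxE /tau -/(G i).
  by field.
by rewrite unitmx_mul HL andbT; apply: diag_unit => i; rewrite mxE.
Qed.

Lemma D1_align (sg : 'I_J -> 'I_J) : injective sg ->
  (forall j h, mu T0 psi j T h false = mu T0 psi' (sg j) T h false) ->
  (forall xi1 : nat -> 'I_K, exists c : 'I_J -> 'I_K,
          \matrix_(i, j) q21 k psi j (c i) xi1 \in unitmx) ->
  (forall xi2 : 'I_K, exists e : 'I_J -> nat -> 'I_K,
          \matrix_(i, j) (tau k psi j (e i) true * q21 k psi j xi2 (e i)) \in unitmx) ->
  forall j h, mu T0 psi j T h true = mu T0 psi' (sg j) T h true.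
Proof.
move=> sinj H0 Hc Hd.
have Hn j n : (1 <= n <= T)%N -> forall h, mu T0 psi j n h false = mu T0 psi' (sg j) n h false.
  move=> hn h.
  apply: (@down_eq _ _ T (fun n h d => mu T0 psi j n h false)
                         (fun n h d => mu T0 psi' (sg j) n h false) _ _ _ n hn h false).
  - by move=> n' h' d' hn'; apply: (mu_marg _ _ _ Ht).
  - by move=> n' h' d' hn'; apply: (mu_marg _ _ _ Ht').
  - by move=> h' d'; apply: H0.
have Hq21 j h x : q21 k psi j x h = q21 k psi' (sg j) x h.
  pose h' := splice k h (fun _ => x).
  have e1 : h' k.+1 = x by rewrite /h' /splice ltnn.
  have e2 p j' : q21 k p j' x h' = q21 k p j' x h by rewrite /q21 /h' /splice leqnn.
  have := Hn j k.+1 (ltac:(lia)) h'; rewrite !mu_k1 e1 !e2 (Hn j k (ltac:(lia)) h').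
  by move/mulfI; apply; rewrite -(Hn j k (ltac:(lia)) h'); apply: mu_k_nz.
have Hk j h : mu T0 psi j k h true = mu T0 psi' (sg j) k h true.
  have [c Uc] := Hc h.
  suff H : forall j, mu T0 psi j k h true - mu T0 psi' (sg j) k h true = 0.
    by apply/eqP; rewrite -subr_eq0 H.
  apply: (vec_zero Uc) => i {j}.
  pose h' := splice k h (fun _ => c i).
  have e1 : h' k.+1 = c i by rewrite /h' /splice ltnn.
  have e2 p j' : q21 k p j' (c i) h' = q21 k p j' (c i) h by rewrite /q21 /h' /splice leqnn.
  have e3 p j' : mu T0 p j' k h' true = mu T0 p j' k h true.
    by apply: mu_ext => // m hm; rewrite /h' /splice ifT //; lia.
  have e : Dat T0 psi k.+1 h' true = Dat T0 psi' k.+1 h' true by apply: Dat_all; lia.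
  rewrite /Dat [RHS](reindex_inj sinj) /= in e.
  under eq_bigr do rewrite mxE.
  rewrite -[RHS](subrr (\sum_j mu T0 psi' (sg j) k.+1 h' true)) -{1}e -sumrB.
  by apply: eq_bigr => j _; rewrite !mu_k1 e1 !e2 !e3 -Hq21; ring.
have Hk1 j h : mu T0 psi j k.+1 h true = mu T0 psi' (sg j) k.+1 h true.
  by rewrite !mu_k1 Hk Hq21.
move=> j h; rewrite !mu_Tt Hk1; congr (_ * _); move: j.
have [e Ue] := Hd (h k.+1).
have Ue' := tau_unit Ue.
suff H : forall j, Rr psi j h - Rr psi' (sg j) h = 0.
  by move=> j; apply/eqP; rewrite -subr_eq0 H.
apply: (vec_zero Ue') => l.
pose h' := splice k (e l) h.
have eR p j' : Rr p j' h' = Rr p j' h by apply: Rr_ext => m hm; rewrite /h' /splice ifF //; lia.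
have eN j' : mu T0 psi j' k.+1 h' true = pi_ psi j' * P1 k psi j' (e l) true * q21 k psi j' (h k.+1) (e l).
  rewrite mu_k1 mu_k; congr (_ * _ * _).
    by apply: P1_ext => m hm; rewrite /h' /splice ifT //; lia.
  by rewrite /h' /splice ltnn /q21 leqnn.
have e0 : Dat T0 psi T h' true = Dat T0 psi' T h' true by apply: Dat_all; lia.
rewrite /Dat [RHS](reindex_inj sinj) /= in e0.
under eq_bigr do rewrite mxE.
rewrite -[RHS](subrr (\sum_j mu T0 psi' (sg j) T h' true)) -{1}e0 -sumrB.
apply: eq_bigr => j _; rewrite !mu_Tt -Hk1 !eR eN; ring.
Qed.

Lemma ident_final :
  (forall i j : 'I_J, (i < j)%N -> pi_ psi i < pi_ psi j) ->
  (forall i j : 'I_J, (i < j)%N -> pi_ psi' i < pi_ psi' j) ->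
  ID T k psi ->
  forall j h d, mu T0 psi j T h d = mu T0 psi' j T h d.
Proof.
move=> Hord Hord' [Ha _ Hc Hd].
have [sg [sinj H0]] := D0_align Ha.
have H1 := D1_align sinj H0 Hc Hd.
have HT j h d : mu T0 psi j T h d = mu T0 psi' (sg j) T h d by case: d; [apply: H1 | apply: H0].
have Hl1 j h d : mu T0 psi j 1 h d = mu T0 psi' (sg j) 1 h d.
  apply: (@down_eq _ _ T (fun n h d => mu T0 psi j n h d)
                         (fun n h d => mu T0 psi' (sg j) n h d) _ _ _ 1 _ h d).
  - by move=> n' h' d' hn'; apply: (mu_marg _ _ _ Ht).
  - by move=> n' h' d' hn'; apply: (mu_marg _ _ _ Ht').
  - by move=> h' d'; apply: HT.
  - lia.
have Hpi j : pi_ psi j = pi_ psi' (sg j).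
  rewrite -(mu1_sum j Ht) -(mu1_sum (sg j) Ht').
  by apply: eq_bigr => x _; apply: eq_bigr => d _; apply: Hl1.
have sid : forall j, sg j = j.
  apply: incr_id => // i j lt; rewrite ltnNge; apply/negP => le.
  have := Hord _ _ lt; rewrite !Hpi.
  case: (ltngtP (sg j) (sg i)) le => // [lt'|eq'] _.
    by move=> h1; have := Hord' _ _ lt'; rewrite ltNge (ltW h1).
  by rewrite (val_inj eq') ltxx.
by move=> j h d; rewrite HT sid.
Qed.

End Ident.

End Helpers.
Import Helpers.

Theorem proposition6 (R : realFieldType) (K J T0 T : nat)
  (hK : (2 <= K)%N) (hJ : (1 <= J)%N) (hT0 : (1 <= T0)%N) (hT : (T0 < T)%N)
  (eps : R) (heps : 0 < eps)
  (M : model R K J) (psi : param R K J) (k : nat)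
  (H : prop6_hyps T0 T eps M psi k) :
  (* the representation of the LTATT *)
  (forall (t : nat) (j : 'I_J), (T0 < t <= T)%N ->
     LTATT M t j =
     \sum_(x : 'I_K)
        cPr M (fun w => Xobs T0 M T0 w == x) (fun w => Dm M w && (Zm M w == j)) *:
        (cE M (fun w => onehot (Xobs T0 M t w))
              (fun w => [&& Xobs T0 M T0 w == x, Dm M w & Zm M w == j])
       - cE M (fun w => onehot (Xobs T0 M t w))
              (fun w => [&& Xobs T0 M T0 w == x, ~~ Dm M w & Zm M w == j])))
  /\
  (* the LTATT is uniquely determined by the pmf of W: any other process
     satisfying the same hypotheses and generating the same pmf of W has the
     same LTATT *)
  (forall (M' : model R K J) (psi' : param R K J) (k' : nat),
     prop6_hyps T0 T eps M' psi' k' ->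
     (forall (h : nat -> 'I_K) (d : bool), pW T0 T psi h d = pW T0 T psi' h d) ->
     forall (t : nat) (j : 'I_J), (T0 < t <= T)%N -> LTATT M t j = LTATT M' t j).
Proof.
pose x0 : 'I_K := Ordinal (ltnW hK).
case: H => [[Hprob _ Htr Hcs _] Ht Hord Hg [hk hkT0 hkT HID]].
split.
  by move=> t j ht; exact: (part1_gen x0 hT0 hT Hprob Hg j ht Hcs Htr).
move=> M' psi' k' [[Hprob' _ Htr' Hcs' _] Ht' Hord' Hg' _] HpW t j ht.
rewrite (part1_gen x0 hT0 hT Hprob Hg j ht Hcs Htr).
rewrite (part1_gen x0 hT0 hT Hprob' Hg' j ht Hcs' Htr').
rewrite (rhs_lawP x0 hT0 hT Hg ht j) (rhs_lawP x0 hT0 hT Hg' ht j).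
apply: rhs_law_eq => j' g d.
have Hq32 : forall j x3 x2, 0 < q32 k psi j x3 x2 by case: HID => _ [] .
apply: (ident_final hT0 hT hk hkT0 hkT Ht Ht' _ Hq32 _ Hord Hord' HID).
  move=> h d'; have := HpW h d'; rewrite /pW /Dat /mu.
  have e (p : param R K J) : \sum_j0 pi_ p j0 * pWj T0 T p j0 h d' = \sum_j0 pi_ p j0 * PW T0 p j0 T h d'.
    by apply: eq_bigr => j0 _; rewrite pWj_PW.
  by rewrite !e.
by move=> j0; exact: (mu_T0_nz x0 hT0 hT Hprob Hg j0 Hcs).
Qed.
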